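(* There exist absolute constants $c,C>0$ such that for every $n\in\mathbb{N}$ there exists a set $S\subseteq\mathbb{F}_2^n$ with $c\sqrt{n}\le|\Delta(S)|\le C\sqrt{n}$ and $\rho(S)=2$.
   Context: For $x,y\in\mathbb{F}_2^n$, the Hamming distance is $d_H(x,y)=\#\{i:x_i\neq y_i\}$, and for $S\subseteq\mathbb{F}_2^n$, $\Delta(S)=\{d_H(x,y):x,y\in S\}$. A set $R\subseteq\mathbb{F}_2^n$ is called rainbow if the $\binom{|R|}{2}$ Hamming distances $d_H(x,y)$ over unordered pairs of distinct points $x,y\in R$ are pairwise distinct. $\rho(S)$ denotes the maximum size of a rainbow subset $R\subseteq S$. *)

(* Defs.v *)
From mathcomp Require Import all_boot.
From Stdlib Require Import Reals.
Set Implicit Arguments. Unset Strict Implicit. Unset Printing Implicit Defensive.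

Definition F2n (n : nat) := {ffun 'I_n -> bool}.

Definition hamming (n : nat) (x y : F2n n) : nat := #|[set i | x i != y i]|.

(* |Delta(S)| : number of distinct values d_H(x,y), x,y in S (x = y allowed). *)
Definition card_Delta (n : nat) (S : {set F2n n}) : nat :=
  size (undup [seq hamming x y | x <- enum S, y <- enum S]).

Definition rainbow (n : nat) (R : {set F2n n}) : bool :=
  [forall x1 in R, forall y1 in R, forall x2 in R, forall y2 in R,
     [&& x1 != y1, x2 != y2 & hamming x1 y1 == hamming x2 y2] ==>
     ([set x1; y1] == [set x2; y2])].

Definition rho (n : nat) (S : {set F2n n}) : nat :=
  \max_(R : {set F2n n} | (R \subset S) && rainbow R) #|R|.

(* Main.v *)
Require Import Defs.
From mathcomp Require Import all_boot.
From Stdlib Require Import Reals Lra.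
From mathcomp Require Import zify.

Lemma count_int a b n : count (fun c => a <= c < b) (iota 0 n) = minn n b - minn n a.
Proof.
elim: n => [|n IH]; first by rewrite !min0n.
rewrite (_ : n.+1 = n + 1); last by rewrite addn1.
rewrite iotaD count_cat IH /= add0n addn0.
case: (boolP (a <= n < b)) => /= h; lia.
Qed.

Lemma card_count n (f : nat -> bool) : #|[set c : 'I_n | f (val c)]| = count f (iota 0 n).
Proof.
rewrite -val_enum_ord count_map cardsE cardE /enum_mem size_filter.
rewrite (@eq_filter _ _ predT) // filter_predT.
by apply: eq_count.
Qed.

Definition P (k j c : nat) : bool :=
  (c < j) || ((k.-1 + 'C(j, 2) <= c) && (c < k.-1 + 'C(j, 2) + j)).

Definition pts (n k : nat) (j : 'I_k) : F2n n := [ffun c : 'I_n => P k j (val c)].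

Lemma binS2 j : 'C(j.+1, 2) = 'C(j, 2) + j.
Proof. by rewrite binS bin1. Qed.

Lemma binmono i j : i < j -> 'C(i, 2) + i <= 'C(j, 2).
Proof.
elim: j => // j IH.
rewrite ltnS leq_eqVlt binS2 => /orP [/eqP -> //|/IH h].
lia.
Qed.

Lemma ham_pts n k (i j : 'I_k) : k.-1 + 'C(k, 2) <= n -> i < j ->
  hamming (pts n k i) (pts n k j) = j.*2.
Proof.
move=> hn hij.
have hj : j <= k.-1 by have := ltn_ord j; lia.
have hb := binmono _ _ hij.
have hk : 'C(j, 2) + j <= 'C(k, 2) by apply: binmono.
rewrite /hamming.
have -> : [set c : 'I_n | pts n k i c != pts n k j c] =
   [set c : 'I_n | (fun c => P k i c != P k j c) (val c)].
  by apply/setP => c; rewrite !inE !ffunE.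
rewrite (card_count n (fun c => P k i c != P k j c)).
set o := k.-1.
have E : forall c, (P k i c != P k j c) =
  [|| (i <= c < j), (o + 'C(i,2) <= c < o + 'C(i,2) + i) | (o + 'C(j,2) <= c < o + 'C(j,2) + j)].
  move=> c; rewrite /P -/o; apply/idP/idP; lia.
rewrite (eq_count E).
set A := (fun c => i <= c < j).
set B := (fun c => (o + 'C(i,2) <= c < o + 'C(i,2) + i)).
set C := (fun c => (o + 'C(j,2) <= c < o + 'C(j,2) + j)).
have Z1 : count (predI B C) (iota 0 n) = 0.
  apply/eqP; rewrite -leqn0 leqNgt -has_count; apply/hasPn => c _ /=; apply/negP; rewrite /B /C; lia.
have Z2 : count (predI A (fun c => B c || C c)) (iota 0 n) = 0.
  apply/eqP; rewrite -leqn0 leqNgt -has_count; apply/hasPn => c _ /=; apply/negP; rewrite /A /B /C; lia.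
have h1 : count (fun c => B c || C c) (iota 0 n) = count B (iota 0 n) + count C (iota 0 n).
  by have := count_predUI B C (iota 0 n); rewrite Z1 addn0.
have h2 : count (fun c => A c || (B c || C c)) (iota 0 n) = count A (iota 0 n) + count (fun c => B c || C c) (iota 0 n).
  by have := count_predUI A (fun c => B c || C c) (iota 0 n); rewrite Z2 addn0.
rewrite h2 h1 /A /B /C !count_int.
have : o <= n by lia.
lia.
Qed.
Lemma hamming_sym n (x y : F2n n) : hamming x y = hamming y x.
Proof. by rewrite /hamming; apply: eq_card => i; rewrite !inE eq_sym. Qed.

Lemma hamming0 n (x : F2n n) : hamming x x = 0.
Proof.
rewrite /hamming; apply/eqP; rewrite cards_eq0; apply/eqP/setP => i.
by rewrite !inE eqxx.
Qed.

Lemma rainbow2 n (u v : F2n n) : rainbow [set u; v].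
Proof.
apply/forall_inP => x1 /set2P [] -> ; apply/forall_inP => y1 /set2P [] -> ;
apply/forall_inP => x2 /set2P [] -> ; apply/forall_inP => y2 /set2P [] -> ;
apply/implyP => /and3P [h1 h2 _]; rewrite ?eqxx // ?(eq_sym v u) in h1 h2 *;
by rewrite ?eqxx ?(setUC [set v]) ?(setUC [set u]).
Qed.


Lemma ultra n k (pts : 'I_k -> F2n n) (g : nat -> nat)
 (Hg : forall a b : 'I_k, a < b -> hamming (pts a) (pts b) = g b)
 (gpos : forall m, 0 < m -> 0 < g m)
 (ginj : forall m1 m2, 0 < m1 < k -> 0 < m2 < k -> g m1 = g m2 -> m1 = m2)
 (k1 : 1 < k) :
 card_Delta [set pts j | j : 'I_k] = k /\ rho [set pts j | j : 'I_k] = 2.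
Proof.
have hd : forall a b : 'I_k, hamming (pts a) (pts b) = if a == b then 0 else g (maxn a b).
  move=> a b; case: eqP => [->|/eqP ab]; first by rewrite hamming0.
  case: (ltngtP a b) => h.
  - by rewrite Hg // (maxn_idPr (ltnW h)).
  - by rewrite hamming_sym Hg // (maxn_idPl (ltnW h)).
  - by move: ab; rewrite -val_eqE /= h eqxx.
have pinj : forall a b, pts a = pts b -> a = b.
  move=> a b e; apply/eqP; apply/negPn/negP => ab.
  have := hd a b; rewrite e hamming0 (negbTE ab) => /esym h.
  have : 0 < maxn a b.
    case: (ltngtP a b) ab => // h'; [ | | by rewrite -val_eqE /= h' eqxx]; lia.
  by move/gpos; rewrite h.
set S := [set pts j | j : 'I_k].
split.
- rewrite /card_Delta.
  set vals := 0 :: [seq g m | m <- iota 1 k.-1].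
  have uv : uniq vals.
    rewrite /vals /= map_inj_in_uniq ?iota_uniq.
      rewrite andbT; apply/negP => /mapP [m]; rewrite mem_iota => hm h.
      have : 0 < g m by apply: gpos; lia.
      by rewrite -h.
    move=> m1 m2; rewrite !mem_iota => h1 h2; apply: ginj; lia.
  have -> : k = size vals by rewrite /vals /= size_map size_iota; lia.
  apply: perm_size; apply: uniq_perm; rewrite ?undup_uniq //.
  move=> v; rewrite mem_undup; apply/allpairsP/idP.
  + move=> [[x y] /= [] ]; rewrite !mem_enum => /imsetP [a _ ->] /imsetP [b _ ->] ->.
    rewrite hd; case: eqP => ab; first by rewrite inE eqxx.
    rewrite inE; apply/orP; right; apply/mapP; exists (maxn a b) => //.
    rewrite mem_iota; case: (ltngtP a b) => h; have := ltn_ord a; have := ltn_ord b; try lia.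
    by case: ab; apply: val_inj.
  + rewrite inE => /orP [/eqP ->|/mapP [m]].
    * have k0 : 0 < k by lia.
      exists (pts (Ordinal k0), pts (Ordinal k0)); by rewrite !mem_enum /= imset_f ?hamming0.
    * rewrite mem_iota => hm ->.
      have k0 : 0 < k by lia.
      have km : m < k by lia.
      exists (pts (Ordinal k0), pts (Ordinal km)); rewrite !mem_enum /= !imset_f //.
      rewrite hd /= -val_eqE /=; case: eqP => [h|_]; first lia.
      by rewrite max0n.
- apply/eqP; rewrite eqn_leq; apply/andP; split.
  + apply/bigmax_leqP => R /andP [RS rR].
    rewrite leqNgt; apply/negP => /card_gt2P [x [y [z [[xR yR zR] [xy yz zx]]]]].
    have key : forall m p q : 'I_k, p < m -> q < m -> p != q ->
        pts m \in R -> pts p \in R -> pts q \in R -> False.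
      move=> m p q pm qm pq hm hp hq.
      move: rR => /forall_inP/(_ _ hm)/forall_inP/(_ _ hp)/forall_inP/(_ _ hm)
                 /forall_inP/(_ _ hq)/implyP.
      have nmp : pts m != pts p by apply/negP => /eqP /pinj e; move: pm; rewrite e ltnn.
      have nmq : pts m != pts q by apply/negP => /eqP /pinj e; move: qm; rewrite e ltnn.
      rewrite nmp nmq !(hamming_sym _ (pts m)) !Hg // eqxx => /(_ isT) /eqP e.
      have : pts p \in [set pts m; pts q] by rewrite -e set22.
      case/set2P => /pinj e'.
      * by move: pm; rewrite e' ltnn.
      * by move: pq; rewrite e' eqxx.
    move: (subsetP RS _ xR) (subsetP RS _ yR) (subsetP RS _ zR).
    move=> /imsetP [a _ ea] /imsetP [b _ eb] /imsetP [c _ ec].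
    subst x y z.
    have ab : a != b by apply/negP => /eqP e; move: xy; rewrite e eqxx.
    have bc : b != c by apply/negP => /eqP e; move: yz; rewrite e eqxx.
    have ca : c != a by apply/negP => /eqP e; move: zx; rewrite e eqxx.
    move: ab bc ca; rewrite -!val_eqE /= => ab bc ca.
    case: (ltngtP a b) => h1; case: (ltngtP b c) => h2; case: (ltngtP a c) => h3; try lia.
    * apply: (key c a b) => //; rewrite -?val_eqE /=; lia.
    * apply: (key b a c) => //; rewrite -?val_eqE /=; lia.
    * apply: (key b a c) => //; rewrite -?val_eqE /=; lia.
    * apply: (key c a b) => //; rewrite -?val_eqE /=; lia.
    * apply: (key a b c) => //; rewrite -?val_eqE /=; lia.
    * apply: (key a b c) => //; rewrite -?val_eqE /=; lia.
  + have k0 : 0 < k by lia.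
    have R2S : [set pts (Ordinal k0); pts (Ordinal k1)] \subset S.
      apply/subsetP => x /set2P [] ->; exact: imset_f.
    have := @leq_bigmax_cond _ (fun R : {set F2n n} => (R \subset S) && rainbow R)
       (fun R => #|R|) [set pts (Ordinal k0); pts (Ordinal k1)].
    rewrite R2S rainbow2 cards2 => /(_ isT).
    suff -> : pts (Ordinal k0) != pts (Ordinal k1) by [].
    by apply/negP => /eqP /pinj.
Qed.
Lemma real_part (n : nat) : (1 <= n)%N ->
  ((1/2) * sqrt (INR n) <= INR (maxn 2 (Nat.sqrt n)))%R /\
  (INR (maxn 2 (Nat.sqrt n)) <= 2 * sqrt (INR n))%R.
Proof.
move=> n1.
have [h1 h2] := Nat.sqrt_spec n (Nat.le_0_l n).
set s := Nat.sqrt n in h1 h2 *.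
set k := maxn 2 s.
have s1 : (1 <= s)%N.
  case: (posnP s) => // s0; rewrite s0 in h2; lia.
have a1 : (s.+1 <= 2 * k)%N by rewrite /k; lia.
have a2 : (k <= 2 * s)%N by rewrite /k; lia.
have b1 : (INR s.+1 <= INR (2 * k))%R by apply: le_INR; apply/leP.
have b2 : (INR k <= INR (2 * s))%R by apply: le_INR; apply/leP.
rewrite mult_INR S_INR /= in b1; rewrite mult_INR /= in b2.
have c1 : (INR n <= (INR s + 1) * (INR s + 1))%R.
  rewrite -S_INR -mult_INR; apply: le_INR; lia.
have c2 : (INR s * INR s <= INR n)%R.
  rewrite -mult_INR; apply: le_INR; lia.
have d1 : (sqrt (INR n) <= INR s + 1)%R.
  rewrite -(sqrt_square (INR s + 1)); last by have := pos_INR s; lra.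
  exact: sqrt_le_1_alt.
have d2 : (INR s <= sqrt (INR n))%R.
  rewrite -(sqrt_square (INR s)); last exact: pos_INR.
  exact: sqrt_le_1_alt.
split; lra.
Qed.

Lemma ham_count n k (i j : 'I_k) :
  hamming (pts n k i) (pts n k j) = count (fun c => P k i c != P k j c) (iota 0 n).
Proof.
rewrite /hamming -(card_count n (fun c => P k i c != P k j c)).
by apply: eq_card => c; rewrite !inE !ffunE.
Qed.

Lemma bin2dbl k : ('C(k, 2)).*2 = k * k.-1.
Proof.
elim: k => // k IH; rewrite binS2 doubleD IH; case: k {IH} => //= k; nia.
Qed.

Lemma exS n : (1 <= n)%N -> exists S : {set F2n n},
  card_Delta S = maxn 2 (Nat.sqrt n) /\ rho S = 2.
Proof.
move=> n1.
case: (ltngtP n 1) => hn; first lia.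
- set k := maxn 2 (Nat.sqrt n).
  have [h1 h2] := Nat.sqrt_spec n (Nat.le_0_l n).
  have hb : (k.-1 + 'C(k, 2) <= n)%N.
    have e := bin2dbl k; rewrite -muln2 in e.
    have : (k = Nat.sqrt n /\ 2 <= Nat.sqrt n)%N \/ (k = 2 /\ Nat.sqrt n < 2)%N by rewrite /k; lia.
    case=> [[ek hs]|[ek hs]]; rewrite ek in e *; [nia | lia].
  exists [set pts n k j | j : 'I_k].
  apply: (@ultra n k (pts n k) (fun m => m.*2)).
  + by move=> a b ab; apply: ham_pts.
  + by move=> m m0; rewrite double_gt0.
  + move=> m1 m2 _ _; rewrite -!muln2; lia.
  + rewrite /k; lia.
- subst n.
  exists [set pts 1 2 j | j : 'I_2].
  apply: (@ultra 1 2 (pts 1 2) (fun _ => 1%N)) => //.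
  + move=> a b ab; rewrite ham_count.
    case: a b ab => [[|[|a]] ha] [[|[|b]] hb] //= _.
  + move=> m1 m2; lia.
Qed.

Theorem theorem1p4 :
  exists c C : R, (0 < c)%R /\ (0 < C)%R /\
    forall n : nat, (1 <= n)%N ->
      exists S : {set F2n n},
        (c * sqrt (INR n) <= INR (card_Delta S))%R /\
        (INR (card_Delta S) <= C * sqrt (INR n))%R /\
        rho S = 2.
Proof.
exists (1/2)%R, 2%R; split; first lra; split; first lra.
move=> n n1.
have [S [hc hr]] := exS n n1.
exists S; rewrite hc; have [r1 r2] := real_part n n1; split => //; split => //.
Qed.
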